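(* Let $X,Y$ be metric spaces and let $X\times Y$ carry a metric for which both projections $\mathrm{pr}_1:X\times Y\to X$ and $\mathrm{pr}_2:X\times Y\to Y$ are 1-Lipschitz. For any two Borel probability measures $\pi,\pi'$ on $X\times Y$, \[ |d_{\mathrm{conc}}^{\pi}(X,Y)-d_{\mathrm{conc}}^{\pi'}(X,Y)|\le 2\,d_{\mathrm P}(\pi,\pi'). \]
   Context: $\mathcal{L}ip_1(X)$ is the set of 1-Lipschitz functions $X\to\mathbb R$, and $\mathrm{pr}_1^*\mathcal{L}ip_1(X):=\{f\circ\mathrm{pr}_1:f\in\mathcal{L}ip_1(X)\}$ (similarly for $Y$). For a Borel probability measure $\pi$ on $X\times Y$ and measurable $F,G:X\times Y\to\mathbb R$, $d_{\mathrm{KF}}^\pi(F,G):=\inf\{\varepsilon\ge0:\pi(\{|F-G|>\varepsilon\})\le\varepsilon\}$, and $d_{\mathrm{conc}}^{\pi}(X,Y):=d_{\mathrm H}^{d_{\mathrm{KF}}^\pi}(\mathrm{pr}_1^*\mathcal{L}ip_1(X),\mathrm{pr}_2^*\mathcal{L}ip_1(Y))$, the Hausdorff distance with respect to $d_{\mathrm{KF}}^\pi$. $d_{\mathrm P}$ is the Prohorov metric on Borel probability measures on $X\times Y$. *)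

(* Defs.v *)
From HB Require Import structures.
From mathcomp Require Import all_boot all_order all_algebra.
From mathcomp Require Import all_classical all_reals all_analysis.
Set Implicit Arguments. Unset Strict Implicit. Unset Printing Implicit Defensive.
Import Order.TTheory GRing.Theory Num.Theory.
Local Open Scope classical_set_scope.
Local Open Scope ring_scope.

Section Defs.
Variable R : realType.

Definition is_metric (T : Type) (d : T -> T -> R) : Prop :=
  [/\ forall x y, 0 <= d x y,
      forall x y, d x y = 0 <-> x = y,
      forall x y, d x y = d y x &
      forall x y z, d x z <= d x y + d y z].

Definition metric_open (T : Type) (d : T -> T -> R) : set (set T) :=
  [set U | forall x, U x -> exists2 e : R, 0 < e & forall y, d x y < e -> U y].

Definition borel_type (T : pointedType) (d : T -> T -> R) : measurableType _ :=
  g_sigma_algebraType (metric_open d).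

Definition Lip1 (T : Type) (d : T -> T -> R) : set (T -> R) :=
  [set f | forall x x', `|f x - f x'| <= d x x'].

Definition dKF (T : Type) (pi : set T -> \bar R) (F G : T -> R) : R :=
  inf [set e : R | 0 <= e /\ (pi [set z | (e < `|F z - G z|)%R] <= e%:E)%E].

Definition hausdorff (U : Type) (d : U -> U -> R) (A B : set U) : R :=
  Num.max (sup [set inf [set d a b | b in B] | a in A])
          (sup [set inf [set d a b | a in A] | b in B]).

Definition dconc (X Y : Type) (dX : X -> X -> R) (dY : Y -> Y -> R)
    (pi : set (X * Y) -> \bar R) : R :=
  hausdorff (dKF pi)
    [set f \o fst | f in Lip1 dX] [set g \o snd | g in Lip1 dY].

Definition nbhd_eps (T : Type) (d : T -> T -> R) (e : R) (A : set T) : set T :=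
  [set z | exists2 a, A a & d z a < e].

Definition prohorov (T : pointedType) (d : T -> T -> R)
    (mu nu : probability (borel_type d) R) : R :=
  inf [set e : R | 0 < e /\
    forall A : set (borel_type d), measurable A ->
      (mu A <= nu (nbhd_eps d e A) + e%:E)%E /\
      (nu A <= mu (nbhd_eps d e A) + e%:E)%E].

End Defs.

(* Main.v *)
Require Import Defs.
From HB Require Import structures.
From mathcomp Require Import all_boot all_order all_algebra.
From mathcomp Require Import all_classical all_reals all_analysis.
From mathcomp Require Import ring lra.
Import Order.TTheory GRing.Theory Num.Theory.
Local Open Scope classical_set_scope.
Local Open Scope ring_scope.

Lemma supinf_le (R : realType) (U V : Type) (A : set U) (B : set V)
  (F F' : U -> V -> R) (c : R) :
  A !=set0 -> B !=set0 ->
  (forall a b, A a -> B b -> 0 <= F a b <= 1) ->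
  (forall a b, A a -> B b -> 0 <= F' a b) ->
  (forall a b, A a -> B b -> F' a b <= F a b + c) ->
  sup [set inf [set F' a b | b in B] | a in A] <=
  sup [set inf [set F a b | b in B] | a in A] + c.
Proof.
move=> [a0 Aa0] [b0 Bb0] hF hF' hle.
apply: ge_sup; first by exists (inf [set F' a0 b | b in B]); exists a0.
move=> _ [a Aa <-].
have h1 : inf [set F' a b | b in B] - c <= inf [set F a b | b in B].
  apply: lb_le_inf; first by exists (F a b0); exists b0.
  move=> _ [b Bb <-]; rewrite lerBlDr.
  apply: le_trans (hle a b Aa Bb).
  apply: ge_inf; last by exists b.
  by exists 0 => _ [b' Bb' <-]; exact: hF'.
have h2 : inf [set F a b | b in B] <= sup [set inf [set F a b | b in B] | a in A].
  apply: ub_le_sup; last by exists a.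
  exists 1 => _ [a' Aa' <-].
  have /andP[h01 h11] := hF a' b0 Aa' Bb0.
  apply: le_trans h11; apply: ge_inf; last by exists b0.
  by exists 0 => _ [b' Bb' <-]; have /andP[] := hF a' b' Aa' Bb'.
by rewrite -lerBlDr; apply: le_trans h2.
Qed.

Lemma haus_le (R : realType) (U : Type) (d d' : U -> U -> R) (A B : set U) (c : R) :
  A !=set0 -> B !=set0 ->
  (forall a b, A a -> B b -> 0 <= d a b <= 1) ->
  (forall a b, A a -> B b -> 0 <= d' a b <= 1) ->
  (forall a b, A a -> B b -> d' a b <= d a b + c) ->
  hausdorff d' A B <= hausdorff d A B + c.
Proof.
move=> nA nB hd hd' hle; rewrite /hausdorff ge_max; apply/andP; split.
- apply: le_trans (@supinf_le _ _ _ A B d d' c nA nB hd _ hle) _.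
    by move=> a b Aa Bb; have /andP[] := hd' a b Aa Bb.
  by rewrite lerD2r le_max lexx.
- apply: le_trans (@supinf_le _ _ _ B A (fun b a => d a b) (fun b a => d' a b) c
      nB nA _ _ _) _.
  + by move=> b a Bb Aa; exact: hd.
  + by move=> b a Bb Aa; have /andP[] := hd' a b Aa Bb.
  + by move=> b a Bb Aa; exact: hle.
  by rewrite lerD2r le_max lexx orbT.
Qed.

Section Main.
Variables (R : realType) (X Y : pointedType)
    (dX : X -> X -> R) (dY : Y -> Y -> R) (dZ : X * Y -> X * Y -> R).
Hypotheses (hX : is_metric dX) (hY : is_metric dY) (hZ : is_metric dZ)
  (h1 : forall z z' : X * Y, dX z.1 z'.1 <= dZ z z')
  (h2 : forall z z' : X * Y, dY z.2 z'.2 <= dZ z z').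

Lemma Hlip (f : X -> R) (g : Y -> R) : Lip1 dX f -> Lip1 dY g ->
  forall z z', `|(f z.1 - g z.2) - (f z'.1 - g z'.2)| <= 2 * dZ z z'.
Proof.
move=> hf hg z z'.
have -> : (f z.1 - g z.2) - (f z'.1 - g z'.2) = (f z.1 - f z'.1) + (g z'.2 - g z.2)
  by ring.
apply: le_trans (ler_normD _ _) _.
have a := hf z.1 z'.1; have b := hg z.2 z'.2; rewrite distrC in b.
have c := h1 z z'; have e := h2 z z'; lra.
Qed.

Lemma meas_open (U : set (X * Y)) : metric_open dZ U ->
  measurable (U : set (borel_type dZ)).
Proof. by move=> hU; apply: sub_sigma_algebra. Qed.

Lemma open_gt (f : X -> R) (g : Y -> R) (e : R) : Lip1 dX f -> Lip1 dY g ->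
  metric_open dZ [set z | e < `|f z.1 - g z.2|].
Proof.
move=> hf hg z /= hz; exists ((`|f z.1 - g z.2| - e) / 2); first lra.
move=> y hy /=.
have L := Hlip f g hf hg z y.
have M := lerB_dist (f z.1 - g z.2) (f y.1 - g y.2).
lra.
Qed.

Lemma open_nbhd (e : R) (A : set (X * Y)) : metric_open dZ (nbhd_eps dZ e A).
Proof.
case: hZ => _ _ hs ht.
move=> z [a Aa hza]; exists (e - dZ z a); first lra.
move=> y hy; exists a => //.
have := ht y z a; rewrite (hs y z); lra.
Qed.

Lemma dKF_set1 (pi : probability (borel_type dZ) R) (f : X -> R) (g : Y -> R) :
  Lip1 dX f -> Lip1 dY g ->
  [set e : R | 0 <= e /\ (pi [set z | (e < `|(f \o fst) z - (g \o snd) z|)%R]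
     <= e%:E)%E] 1.
Proof.
move=> hf hg; split; first lra.
apply: probability_le1; apply: meas_open; exact: open_gt.
Qed.

Lemma dKF_bounds (pi : probability (borel_type dZ) R) (f : X -> R) (g : Y -> R) :
  Lip1 dX f -> Lip1 dY g -> 0 <= dKF pi (f \o fst) (g \o snd) <= 1.
Proof.
move=> hf hg; rewrite /dKF; apply/andP; split.
- apply: lb_le_inf; first by exists 1; exact: dKF_set1.
  by move=> x [].
- apply: ge_inf; last exact: dKF_set1.
  by exists 0 => x [].
Qed.

Lemma dKF_shift (pi pi' : probability (borel_type dZ) R) (f : X -> R) (g : Y -> R)
  (e : R) : Lip1 dX f -> Lip1 dY g -> 0 < e ->
  (forall A : set (borel_type dZ), measurable A ->
     (pi' A <= pi (nbhd_eps dZ e A) + e%:E)%E) ->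
  dKF pi' (f \o fst) (g \o snd) <= dKF pi (f \o fst) (g \o snd) + 2 * e.
Proof.
move=> hf hg he hP; rewrite /dKF -lerBlDr.
apply: lb_le_inf; first by exists 1; exact: dKF_set1.
move=> x [hx0 hx]; rewrite lerBlDr.
apply: ge_inf; first by exists 0 => y [].
split; first lra.
set A := [set z | x + 2 * e < `|f z.1 - g z.2|].
have mA : measurable (A : set (borel_type dZ)) by apply: meas_open; exact: open_gt.
apply: le_trans (hP A mA) _.
have sub : nbhd_eps dZ e A `<=` [set z | (x < `|(f \o fst) z - (g \o snd) z|)%R].
  move=> z [a Aa hza] /=.
  have L := Hlip f g hf hg z a.
  have M := lerB_dist (f a.1 - g a.2) (f z.1 - g z.2).
  rewrite distrC in M. rewrite /A /= in Aa. lra.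
have le1 : (pi (nbhd_eps dZ e A) <= pi [set z | (x < `|(f \o fst) z - (g \o snd) z|)%R])%E.
  apply: le_measure; rewrite ?inE //.
  - by apply: meas_open; exact: open_nbhd.
  - by apply: meas_open; exact: open_gt.
apply: le_trans (leeD2r _ (le_trans le1 hx)) _.
rewrite -EFinD lee_fin; lra.
Qed.

Lemma main_sec (pi pi' : probability (borel_type dZ) R) :
  `|dconc dX dY pi - dconc dX dY pi'| <= 2 * prohorov pi pi'.
Proof.
set S := [set e : R | 0 < e /\
    forall A : set (borel_type dZ), measurable A ->
      (pi A <= pi' (nbhd_eps dZ e A) + e%:E)%E /\
      (pi' A <= pi (nbhd_eps dZ e A) + e%:E)%E].
have S1 : S 1.
  split; first lra.
  move=> A mA; split.
  - apply: le_trans (probability_le1 _ mA) _.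
    by rewrite addeC; apply: leeDl; exact: measure_ge0.
  - apply: le_trans (probability_le1 _ mA) _.
    by rewrite addeC; apply: leeDl; exact: measure_ge0.
have cst : Lip1 dX (fun _ => 0).
  by move=> x x'; rewrite subrr normr0; case: hX.
have cstY : Lip1 dY (fun _ => 0).
  by move=> x x'; rewrite subrr normr0; case: hY.
have nA : [set (f \o fst : X * Y -> R) | f in Lip1 dX] !=set0.
    by exists ((fun _ => 0) \o fst); exists (fun _ => 0).
have nB : [set (g \o snd : X * Y -> R) | g in Lip1 dY] !=set0.
    by exists ((fun _ => 0) \o snd); exists (fun _ => 0).
have key : forall e, S e -> `|dconc dX dY pi - dconc dX dY pi'| <= 2 * e.
  move=> e [he hP].
  have a : dconc dX dY pi' <= dconc dX dY pi + 2 * e.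
    apply: haus_le => //.
    - by move=> _ _ [f hf <-] [g hg <-]; exact: dKF_bounds.
    - by move=> _ _ [f hf <-] [g hg <-]; exact: dKF_bounds.
    - move=> _ _ [f hf <-] [g hg <-]; apply: dKF_shift => //.
      by move=> A mA; case: (hP A mA).
  have b : dconc dX dY pi <= dconc dX dY pi' + 2 * e.
    apply: haus_le => //.
    - by move=> _ _ [f hf <-] [g hg <-]; exact: dKF_bounds.
    - by move=> _ _ [f hf <-] [g hg <-]; exact: dKF_bounds.
    - move=> _ _ [f hf <-] [g hg <-]; apply: dKF_shift => //.
      by move=> A mA; case: (hP A mA).
  rewrite ler_norml; apply/andP; split; lra.
have : `|dconc dX dY pi - dconc dX dY pi'| / 2 <= prohorov pi pi'.
  apply: lb_le_inf; first by exists 1.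
  move=> e Se; have := key e Se; lra.
lra.
Qed.

End Main.

Theorem lemma5p7 (R : realType) (X Y : pointedType)
    (dX : X -> X -> R) (dY : Y -> Y -> R) (dZ : X * Y -> X * Y -> R) :
  is_metric dX -> is_metric dY -> is_metric dZ ->
  (forall z z' : X * Y, dX z.1 z'.1 <= dZ z z') ->
  (forall z z' : X * Y, dY z.2 z'.2 <= dZ z z') ->
  forall pi pi' : probability (borel_type dZ) R,
    `|dconc dX dY pi - dconc dX dY pi'| <= 2 * prohorov pi pi'.
Proof. by move=> hX hY hZ h1 h2 pi pi'; exact: main_sec. Qed.
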